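(* Let $n\ge 2$ and $N(x)=1-x$. Then $\mathbf{H}$ is self-dual with respect to $N$: $1-\mathbf{H}(1-x_1,\dots,1-x_n)=\mathbf{H}(x_1,\dots,x_n)$ for all $\mathbf{x}\in[0,1]^n$.
   Context: For $\mathbf{x}\in[0,1]^n$ let $x_{(1)}\ge\dots\ge x_{(n)}$ be its entries in decreasing order, and define the median $Med(\mathbf{x})=\frac12(x_{(k)}+x_{(k+1)})$ if $n=2k$ and $Med(\mathbf{x})=x_{(k+1)}$ if $n=2k+1$. Define $f_i(\mathbf{x})=\frac1n$ if $x_1=\dots=x_n$, and otherwise $f_i(\mathbf{x})=\frac{1}{n-1}\Big(1-\frac{|x_i-Med(\mathbf{x})|}{\sum_{j=1}^n|x_j-Med(\mathbf{x})|}\Big)$. Then $\mathbf{H}(\mathbf{x})=\sum_{i=1}^n f_i(\mathbf{x})\,x_i$. *)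

(* Defs.v *)
From mathcomp Require Import all_boot all_order all_algebra.
Set Implicit Arguments. Unset Strict Implicit. Unset Printing Implicit Defensive.
Import Order.TTheory GRing.Theory Num.Theory.
Local Open Scope ring_scope.

(* Entries of x in decreasing order: x_(1) >= ... >= x_(n); the j-th order
   statistic x_(j) (1-based) is (dsort x)`_(j-1). *)
Definition dsort (R : realFieldType) (n : nat) (x : 'I_n -> R) : seq R :=
  sort (fun a b : R => b <= a) [seq x i | i <- enum 'I_n].

(* Med(x) = (x_(k) + x_(k+1))/2 if n = 2k, x_(k+1) if n = 2k+1. *)
Definition Med (R : realFieldType) (n : nat) (x : 'I_n -> R) : R :=
  let s := dsort x in
  let k := n./2 in
  if odd n then s`_k else (s`_k.-1 + s`_k) / 2.

Definition allEq (R : realFieldType) (n : nat) (x : 'I_n -> R) : bool :=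
  [forall i, forall j, x i == x j].

Definition fw (R : realFieldType) (n : nat) (x : 'I_n -> R) (i : 'I_n) : R :=
  if allEq x then 1 / n%:R
  else (1 / (n%:R - 1)) *
       (1 - `|x i - Med x| / (\sum_(j < n) `|x j - Med x|)).

Definition H (R : realFieldType) (n : nat) (x : 'I_n -> R) : R :=
  \sum_(i < n) fw x i * x i.

(* Main.v *)
Require Import Defs.
From mathcomp Require Import all_boot all_order all_algebra.
From mathcomp Require Import ring lra zify.
Import Order.TTheory GRing.Theory Num.Theory.
Local Open Scope ring_scope.

Lemma dsort_neg (R : realFieldType) (n : nat) (x : 'I_n -> R) :
  dsort (fun i => 1 - x i) = map (fun a => 1 - a) (rev (dsort x)).
Proof.
rewrite /dsort.
have -> : [seq 1 - x i | i <- enum 'I_n] = map (fun a => 1 - a) [seq x i | i <- enum 'I_n].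
  by rewrite -[RHS]map_comp.
rewrite [LHS]sort_map; congr (map _ _).
apply: (@sorted_eq _ (fun a b : R => a <= b)).
- by move=> a b c; apply: le_trans.
- by move=> a b /andP[h1 h2]; apply: le_anti; rewrite h1 h2.
- have E : relpre (fun a : R => 1 - a) (fun a b : R => b <= a) =2 (fun a b : R => a <= b).
    by move=> a b /=; rewrite lerD2l lerN2.
  rewrite -(eq_sorted E); apply: sort_sorted => a b /=; exact: le_total.
- rewrite rev_sorted; apply: sort_sorted => a b; exact: le_total.
- by rewrite perm_sym perm_rev perm_sort perm_sym perm_sort.
Qed.

Lemma size_dsort (R : realFieldType) (n : nat) (x : 'I_n -> R) : size (dsort x) = n.
Proof. by rewrite /dsort size_sort size_map size_enum_ord. Qed.

Lemma Med_neg (R : realFieldType) (n : nat) (hn : (2 <= n)%N) (x : 'I_n -> R) :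
  Med (fun i => 1 - x i) = 1 - Med x.
Proof.
rewrite /Med dsort_neg.
set t := dsort x.
have st : size t = n by rewrite size_dsort.
set k := n./2.
have hk : (odd n + k + k = n)%N by rewrite -addnA addnn /k odd_double_half.
have nm : forall j, (j < n)%N -> (map (fun a => 1 - a) (rev t))`_j = 1 - t`_(n - j.+1).
  move=> j hj; rewrite (nth_map 0); last by rewrite size_rev st.
  by rewrite nth_rev ?st.
case: ifP => ho.
  rewrite nm; last by rewrite ho in hk; lia.
  by rewrite ho in hk; congr (1 - t`__); lia.
rewrite ho in hk.
rewrite !nm //; try lia.
have -> : (n - k.-1.+1 = k)%N by lia.
have -> : (n - k.+1 = k.-1)%N by lia.
field. all: by [].
Qed.

Lemma fw_neg (R : realFieldType) (n : nat) (hn : (2 <= n)%N) (x : 'I_n -> R) i :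
  fw (fun i => 1 - x i) i = fw x i.
Proof.
have hA : allEq (fun i => 1 - x i) = allEq x.
  rewrite /allEq; apply: eq_forallb => a; apply: eq_forallb => b.
  by apply/idP/idP => /eqP h; apply/eqP; lra.
have hd : forall j, `|1 - x j - Med (fun i => 1 - x i)| = `|x j - Med x|.
  move=> j; rewrite Med_neg //.
  have -> : 1 - x j - (1 - Med x) = - (x j - Med x) by ring.
  by rewrite normrN.
rewrite /fw hA hd; congr (if _ then _ else _ * (1 - _ / _)).
by apply: eq_bigr => j _; rewrite hd.
Qed.

Lemma sum_fw (R : realFieldType) (n : nat) (hn : (2 <= n)%N) (x : 'I_n -> R) :
  \sum_(i < n) fw x i = 1.
Proof.
case: (boolP (allEq x)) => hA.
  under eq_bigr => i _ do rewrite /fw hA.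
  rewrite sumr_const card_ord -[LHS]mulr_natr mul1r mulVf //.
  by rewrite pnatr_eq0; lia.
under eq_bigr => i _ do rewrite /fw (negbTE hA).
set S := \sum_(j < n) `|x j - Med x|.
have hS : S != 0.
  apply/negP => /eqP /psumr_eq0P h.
  move/negP: hA; apply; apply/forallP => a; apply/forallP => b.
  have h' := h (fun i _ => normr_ge0 _).
  move: (h' a isT) (h' b isT) => /eqP; rewrite normr_eq0 subr_eq0 => /eqP ->.
  by move=> /eqP; rewrite normr_eq0 subr_eq0 => /eqP ->.
rewrite -mulr_sumr sumrB sumr_const card_ord -mulr_suml -/S mulfV //.
have hn1 : (n%:R - 1 : R) != 0.
  have -> : (n%:R - 1 : R) = (n - 1)%:R by rewrite natrB //; lia.
  by rewrite pnatr_eq0; lia.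
by rewrite [1 *+ n]/(n%:R) mul1r mulVf.
Qed.

Theorem proposition17 (R : realFieldType) (n : nat) (hn : (2 <= n)%N)
  (x : 'I_n -> R) (hx : forall i, 0 <= x i <= 1) :
  1 - H (fun i => 1 - x i) = H x.
Proof.
rewrite /H.
under eq_bigr => i _ do rewrite fw_neg // mulrBr mulr1.
rewrite sumrB sum_fw //; ring.
Qed.
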